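(* Let $H=(V,E)$ be a hypergraph whose vertex set $V$ is a partition of $[n]$ into sets of cardinality at least $2$, and suppose $H$ is downward-closed (for every $e\in E$ and every $e'\subseteq e$ with $|e'|>1$, $e'\in E$). Let $D=\{\bar i_I\}_{I\in V}$ with $\bar i_I\in I$ for each $I\in V$. Then the coordinate projection $\operatorname{proj}_{\mathcal{J}^H_\le(D)}$, restricted to $\mathrm{MC}^H$, is a bijection from $\mathrm{MC}^H$ onto $\mathrm{MC}^H_\le(D)$.
   Context: Let $n$ be a positive integer, $[n]=\{1,\dots,n\}$. A hypergraph $H=(V,E)$ here has as vertex set $V$ a family of pairwise disjoint subsets of $[n]$, each of cardinality at least $2$, and hyperedge set $E$ consisting of subsets $e\subseteq V$ with $|e|\ge 2$. Write $L(V)=\{\{I\}: I\in V\}$. For a nonempty $e\subseteq V$, $\mathcal{J}^e$ denotes the family of sets $J\subseteq \bigcup_{I\in e} I$ with $|J\cap I|=1$ for every $I\in e$. Let $\mathcal{J}^H=\bigcup_{e\in L(V)\cup E}\mathcal{J}^e$. For a vector $w$ indexed by sets, write $w_i=w_{\{i\}}$ and $w(A)=\sum_{i\in A}w_i$. Let $\mathscr{S}^H=\{w\in\{0,1\}^{\mathcal{J}^H}: w(I)=1\ \forall I\in V;\ w_J=\prod_{i\in J}w_i\ \forall J\in\mathcal{J}^H, |J|>1\}$ and $\mathrm{MC}^H=\operatorname{conv}\mathscr{S}^H$. For $D$ as in the claim, $\mathcal{J}^H_\le(D)=\{J\in\mathcal{J}^H: J\subseteq[n]\setminus D\}$ and $\mathrm{MC}^H_\le(D)=\operatorname{conv}\{v\in\{0,1\}^{\mathcal{J}^H_\le(D)}: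 v(I\setminus D)\le 1\ \forall I\in V;\ v_J=\prod_{i\in J}v_i\ \forall J\in\mathcal{J}^H_\le(D), |J|>1\}$. *)

(* Defs.v *)
From HB Require Import structures.
From mathcomp Require Import all_boot all_order all_algebra.
From mathcomp Require Import reals.
Set Implicit Arguments. Unset Strict Implicit. Unset Printing Implicit Defensive.
Import Order.TTheory GRing.Theory Num.Theory.
Local Open Scope ring_scope.

(* [n] is modelled as 'I_n (elements 0..n-1).  Vectors indexed by a family
   of sets F ⊆ 2^[n] are modelled as functions {ffun {set 'I_n} -> R}
   (resp. -> bool) vanishing outside F; this is canonically R^F. *)

Definition Jfam (n : nat) (e : {set {set 'I_n}}) : {set {set 'I_n}} :=
  [set J : {set 'I_n} | (J \subset \bigcup_(I in e) I)
                        && [forall I in e, #|J :&: I| == 1%N]].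

Definition LV (n : nat) (V : {set {set 'I_n}}) : {set {set {set 'I_n}}} :=
  [set [set I] | I in V].

Definition JH (n : nat) (V : {set {set 'I_n}}) (E : {set {set {set 'I_n}}})
  : {set {set 'I_n}} :=
  \bigcup_(e in LV V :|: E) Jfam e.

Definition JHle (n : nat) (V : {set {set 'I_n}}) (E : {set {set {set 'I_n}}})
  (D : {set 'I_n}) : {set {set 'I_n}} :=
  [set J in JH V E | J \subset ~: D].

Definition SH (n : nat) (V : {set {set 'I_n}}) (E : {set {set {set 'I_n}}})
  (w : {ffun {set 'I_n} -> bool}) : Prop :=
  [/\ (forall J, J \notin JH V E -> w J = false),
      (forall I, I \in V -> (\sum_(i in I) (w [set i] : nat))%N = 1%N) &
      (forall J, J \in JH V E -> (1 < #|J|)%N -> w J = [forall i in J, w [set i]])].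

Definition SHle (n : nat) (V : {set {set 'I_n}}) (E : {set {set {set 'I_n}}})
  (D : {set 'I_n}) (v : {ffun {set 'I_n} -> bool}) : Prop :=
  [/\ (forall J, J \notin JHle V E D -> v J = false),
      (forall I, I \in V -> (\sum_(i in I :\: D) (v [set i] : nat) <= 1)%N) &
      (forall J, J \in JHle V E D -> (1 < #|J|)%N -> v J = [forall i in J, v [set i]])].

Definition conv01 (R : realType) (K : finType) (A : {ffun K -> bool} -> Prop)
  (x : {ffun K -> R}) : Prop :=
  exists lam : {ffun {ffun K -> bool} -> R},
    [/\ (forall v, 0 <= lam v),
        (forall v, ~ A v -> lam v = 0),
        \sum_v lam v = 1 &
        (forall k, x k = \sum_v lam v * ((v k : nat)%:R))].

Definition MC (R : realType) (n : nat) (V : {set {set 'I_n}})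
  (E : {set {set {set 'I_n}}}) : {ffun {set 'I_n} -> R} -> Prop :=
  conv01 (SH V E).

Definition MCle (R : realType) (n : nat) (V : {set {set 'I_n}})
  (E : {set {set {set 'I_n}}}) (D : {set 'I_n}) : {ffun {set 'I_n} -> R} -> Prop :=
  conv01 (SHle V E D).

Definition projle (R : realType) (n : nat) (V : {set {set 'I_n}})
  (E : {set {set {set 'I_n}}}) (D : {set 'I_n}) (x : {ffun {set 'I_n} -> R})
  : {ffun {set 'I_n} -> R} :=
  [ffun J => if J \in JHle V E D then x J else 0].

(* Main.v *)
Require Import Defs.
From HB Require Import structures.
From mathcomp Require Import all_boot all_order all_algebra.
From mathcomp Require Import reals.
From Stdlib Require Import Classical.
Import Order.TTheory GRing.Theory Num.Theory.
Local Open Scope ring_scope.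
Set Implicit Arguments. Unset Strict Implicit. Unset Printing Implicit Defensive.

Lemma sum_eq_on (R : realType) (K : finType) (A : {ffun K -> bool} -> Prop)
  (lam : {ffun {ffun K -> bool} -> R}) (g h : {ffun K -> bool} -> R) :
  (forall v, ~ A v -> lam v = 0) -> (forall v, A v -> g v = h v) ->
  \sum_v lam v * g v = \sum_v lam v * h v.
Proof.
move=> l0 gh; apply: eq_bigr => v _.
case: (classic (A v)) => [/gh -> // | /l0 ->]; by rewrite !mul0r.
Qed.

Lemma conv_push (R : realType) (K : finType) (A B : {ffun K -> bool} -> Prop)
  (f : {ffun K -> bool} -> {ffun K -> bool}) (lam : {ffun {ffun K -> bool} -> R}) :
  (forall v, 0 <= lam v) -> (forall v, ~ A v -> lam v = 0) -> \sum_v lam v = 1 ->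
  (forall w, A w -> B (f w)) ->
  conv01 B [ffun k => \sum_w lam w * ((f w k : nat)%:R)].
Proof.
move=> l0 lA l1 AB.
exists [ffun u => \sum_(w | f w == u) lam w]; split.
- move=> u; rewrite ffunE; apply: sumr_ge0 => w _; exact: l0.
- move=> u nB; rewrite ffunE; apply: big1 => w /eqP fw.
  case: (classic (A w)) => [Aw|/lA //].
  by exfalso; apply: nB; rewrite -fw; apply: AB.
- rewrite -l1 [RHS](partition_big f xpredT) //=; apply: eq_bigr => u _; by rewrite ffunE.
- move=> k; rewrite ffunE [LHS](partition_big f xpredT) //=; apply: eq_bigr => u _.
  rewrite ffunE big_distrl /=; apply: eq_bigr => w /eqP ->; done.
Qed.

Section Main.
Variable R : realType.
Variable n : nat.
Variables (V : {set {set 'I_n}}) (E : {set {set {set 'I_n}}}) (ibar : {set 'I_n} -> 'I_n).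
Hypothesis hP : partition V [set: 'I_n].
Hypothesis hE : forall e, e \in E -> (e \subset V) && (2 <= #|e|)%N.
Hypothesis hdown : forall (e e' : {set {set 'I_n}}), e \in E -> e' \subset e -> (1 < #|e'|)%N -> e' \in E.
Hypothesis hibar : forall I, I \in V -> ibar I \in I.

Local Notation D := [set ibar I | I in V].
Local Notation pb := (pblock V).

Lemma triv : trivIset V.
Proof. by case/and3P: hP. Qed.

Lemma pb_mem i : pb i \in V.
Proof. apply: pblock_mem; case/and3P: hP => /eqP -> _ _; exact: in_setT. Qed.

Lemma in_pb i : i \in pb i.
Proof. rewrite mem_pblock; case/and3P: hP => /eqP -> _ _; exact: in_setT. Qed.

Lemma pb_eq I i : I \in V -> i \in I -> pb i = I.
Proof. exact: def_pblock triv. Qed.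

Lemma inD i : (i \in D) = (i == ibar (pb i)).
Proof.
apply/imsetP/eqP => [[I IV ->]|->]; first by rewrite (pb_eq IV (hibar IV)).
by exists (pb i) => //; exact: pb_mem.
Qed.

Lemma D_block I i : I \in V -> i \in I -> (i \in D) = (i == ibar I).
Proof. by move=> IV iI; rewrite inD (pb_eq IV iI). Qed.

Lemma setDD I : I \in V -> I :\: D = I :\ ibar I.
Proof.
move=> IV; apply/setP => x; rewrite !inE.
by case xI: (x \in I); rewrite ?andbF // (D_block IV xI).
Qed.

Definition T (J : {set 'I_n}) : Prop :=
  {in J &, injective pb} /\ ((#|J| <= 1)%N \/ pb @: J \in E).

Lemma JH_T J : J \in JH V E -> T J /\ J != set0.
Proof.
case/bigcupP => e he; rewrite inE => /andP [sub /forall_inP c1].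
have [eV ecase] : e \subset V /\ ((exists2 I, I \in V & e = [set I]) \/ e \in E).
  move: he; rewrite inE => /orP [/imsetP [I IV ->]|eE].
    by split; [rewrite sub1set | left; exists I].
  by case/andP: (hE eE) => eV _; split=> //; right.
have pbJ : forall i, i \in J -> pb i \in e.
  move=> i /(subsetP sub) /bigcupP [I Ie iI].
  by rewrite (pb_eq (subsetP eV _ Ie) iI).
have inj : {in J &, injective pb}.
  move=> i j iJ jJ eij.
  have := c1 _ (pbJ _ iJ) => /cards1P [x hx].
  have : i \in J :&: pb i by rewrite inE iJ in_pb.
  have : j \in J :&: pb i by rewrite inE jJ eij in_pb.
  by rewrite hx => /set1P -> /set1P ->.
have img : pb @: J = e.
  apply/setP => I; apply/imsetP/idP => [[i iJ ->]|Ie]; first exact: pbJ.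
  have := c1 _ Ie => /cards1P [x hx].
  have : x \in J :&: I by rewrite hx set11.
  rewrite inE => /andP [xJ xI]; exists x => //.
  by rewrite (pb_eq (subsetP eV _ Ie) xI).
split; [split=> // |].
  case: ecase => [[I IV eI]|eE]; last by right; rewrite img.
  by left; rewrite -(card_in_imset inj) img eI cards1.
apply/negP => /eqP J0; move: img; rewrite J0 imset0 => e0.
case: ecase => [[I IV eI]|eE].
  by move: e0; rewrite eI => /setP /(_ I); rewrite set11 in_set0.
by case/andP: (hE eE); rewrite -e0 cards0.
Qed.

Lemma T_JH J : T J -> J != set0 -> J \in JH V E.
Proof.
move=> [inj cc] J0.
have Jfe : J \in Jfam (pb @: J).
  rewrite inE; apply/andP; split.
    apply/subsetP => i iJ; apply/bigcupP; exists (pb i); last exact: in_pb.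
    exact: imset_f.
  apply/forall_inP => I /imsetP [k kJ ->]; apply/cards1P; exists k.
  apply/setP => x; rewrite !inE; apply/andP/eqP => [[xJ xk]|->]; last by rewrite kJ in_pb.
  apply: inj => //; by rewrite (pb_eq (pb_mem k) xk).
apply/bigcupP; exists (pb @: J) => //; rewrite inE.
case: cc => [c1|->]; last by rewrite orbT.
have : #|J| == 1%N.
  by rewrite eqn_leq c1 card_gt0.
case/cards1P => i Ji; rewrite Ji imset_set1; apply/orP; left.
apply: imset_f; exact: pb_mem.
Qed.

Lemma forall1 (X : finType) (u : X -> bool) (i : X) : [forall x in [set i], u x] = u i.
Proof.
by apply/forall_inP/idP => [h | h x /set1P ->]; [apply: h; rewrite set11 |].
Qed.

Lemma set1_n0 (i : 'I_n) : [set i] != set0.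
Proof. by apply/set0Pn; exists i; rewrite set11. Qed.

Lemma single_JH i : [set i] \in JH V E.
Proof.
apply: T_JH; last exact: set1_n0.
split; last by left; rewrite cards1.
by move=> x y /set1P -> /set1P ->.
Qed.

Lemma single_JHle i : i \notin D -> [set i] \in JHle V E D.
Proof. by move=> iD; rewrite inE single_JH sub1set in_setC iD. Qed.

Lemma prod_JH (u : {ffun {set 'I_n} -> bool}) J : J \in JH V E ->
  ((1 < #|J|)%N -> u J = [forall i in J, u [set i]]) ->
  u J = [forall i in J, u [set i]].
Proof.
move=> JJ h; case: (ltnP 1 #|J|) => [/h //|c1].
have [_ J0] := JH_T JJ.
have : #|J| == 1%N by rewrite eqn_leq c1 card_gt0.
by case/cards1P => i ->; rewrite (forall1 (fun x => u [set x])).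
Qed.

Definition Aff (g : {ffun {set 'I_n} -> bool} -> R) : Prop :=
  forall lam mu : {ffun {ffun {set 'I_n} -> bool} -> R},
   (forall w, ~ SH V E w -> lam w = 0) -> (forall w, ~ SH V E w -> mu w = 0) ->
   \sum_w lam w = 1 -> \sum_w mu w = 1 ->
   (forall K, K \in JHle V E D -> \sum_w lam w * (w K : nat)%:R = \sum_w mu w * (w K : nat)%:R) ->
   \sum_w lam w * g w = \sum_w mu w * g w.

Lemma Aff_ext g h : (forall w, SH V E w -> g w = h w) -> Aff g -> Aff h.
Proof.
move=> gh Ag lam mu l0 m0 l1 m1 hK.
rewrite -(sum_eq_on l0 gh) -(sum_eq_on m0 gh); exact: Ag.
Qed.

Lemma Aff_const c : Aff (fun _ => c).
Proof. move=> lam mu _ _ l1 m1 _; by rewrite -!mulr_suml l1 m1. Qed.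

Lemma Aff_coord K : K \in JHle V E D -> Aff (fun w => (w K : nat)%:R).
Proof. move=> KJ lam mu _ _ _ _ hK; exact: hK. Qed.

Lemma Aff_sub g (S : {set 'I_n}) h : Aff g -> (forall j, j \in S -> Aff (h j)) ->
  Aff (fun w => g w - \sum_(j in S) h j w).
Proof.
move=> Ag Ah lam mu l0 m0 l1 m1 hK.
under eq_bigr do rewrite mulrBr mulr_sumr.
under [RHS]eq_bigr do rewrite mulrBr mulr_sumr.
rewrite !sumrB (Ag lam mu) //; congr (_ - _).
rewrite exchange_big [RHS]exchange_big /=; apply: eq_bigr => j jS; exact: Ah.
Qed.

Lemma forallU1 (u : 'I_n -> bool) a A :
  [forall i in a |: A, u i] = u a && [forall i in A, u i].
Proof.
apply/forall_inP/andP => [h|[ha /forall_inP h] i].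
  split; first by apply: h; rewrite setU11.
  by apply/forall_inP => i iA; apply: h; rewrite setU1r.
by case/setU1P => [->|/h].
Qed.

Lemma Aff_T k : forall J, #|J :&: D| = k -> T J ->
  Aff (fun w => ([forall i in J, w [set i]] : nat)%:R).
Proof.
elim/ltn_ind: k => k IH J Jk TJ.
case: (set_0Vmem (J :&: D)) => [J0 | [d hd]].
  case: (eqVneq J set0) => [-> | Jn0].
    apply: (Aff_ext _ (Aff_const 1)) => w _.
    by rewrite (_ : [forall i in set0, _] = true) //; apply/forall_inP => i; rewrite in_set0.
  have JJ : J \in JHle V E D.
    rewrite inE (T_JH TJ Jn0) /=; apply/subsetP => i iJ; rewrite in_setC.
    apply/negP => iD; have : i \in J :&: D by rewrite inE iJ iD.
    by rewrite J0 in_set0.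
  apply: (Aff_ext _ (Aff_coord JJ)) => w [_ _ h3].
  move: JJ; rewrite inE => /andP [JJ _].
  by rewrite (prod_JH JJ (h3 J JJ)).
move: hd; rewrite inE => /andP [dJ dD].
have IV : pb d \in V := pb_mem d.
have dI : d \in pb d := in_pb d.
have dbar : d = ibar (pb d) by apply/eqP; rewrite -(D_block IV dI).
case: TJ => inj cc.
have J'J : J :\ d \subset J by apply: subsetDl.
have TJ' : T (J :\ d).
  split; first exact: (sub_in2 (subsetP J'J) inj).
  case: (ltnP #|J :\ d| 2) => c'; [by left | right].
  have cJ : #|J| = #|J :\ d|.+1 by rewrite (cardsD1 d J) dJ.
  case: cc => [c1|JE]; first by move: c1 c'; rewrite cJ; case: #|J :\ d| => [|[|]].
  apply: hdown JE (imsetS _ J'J) _.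
  by rewrite (card_in_imset (sub_in2 (subsetP J'J) inj)).
have IdD : pb d :\ d = pb d :\: D by rewrite setDD // -dbar.
have key : forall w, SH V E w ->
  (([forall i in J, w [set i]] : nat)%:R : R) =
  ([forall i in J :\ d, w [set i]] : nat)%:R -
    \sum_(j in pb d :\: D) ([forall i in j |: (J :\ d), w [set i]] : nat)%:R.
  move=> w [_ h2 _].
  rewrite -{1}(setD1K dJ) (forallU1 (fun i => w [set i])).
  under eq_bigr do rewrite (forallU1 (fun i => w [set i])) -mulnb natrM.
  rewrite -mulnb natrM -mulr_suml.
  have hs := h2 _ IV; rewrite (big_setD1 d) //= IdD in hs.
  have := congr1 (fun m => m%:R : R) hs; rewrite natrD natr_sum => hsR.
  have -> : ((w [set d] : nat)%:R : R) = 1 - \sum_(i in pb d :\: D) (w [set i] : nat)%:R.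
    by apply: (canRL (addrK _)); exact: hsR.
  by rewrite mulrBl mul1r.
apply: (Aff_ext (g := fun w => (([forall i in J :\ d, w [set i]] : nat)%:R) -
    \sum_(j in pb d :\: D) ([forall i in j |: (J :\ d), w [set i]] : nat)%:R)).
  by move=> w /key ->.
apply: Aff_sub.
  apply: (IH #|(J :\ d) :&: D|) => //; rewrite -Jk; apply: proper_card.
  apply/properP; split; first exact: setSI.
  by exists d; rewrite !inE ?eqxx ?dJ ?dD.
move=> j; rewrite inE => /andP [jD jI].
have hj : forall b, b \in J :\ d -> pb j = pb b -> False.
  move=> b bJ' e.
  have bd : b = d.
    apply: inj; [exact: (subsetP J'J _ bJ') | exact: dJ | by rewrite -e (pb_eq IV jI)].
  by move: bJ'; rewrite bd !inE eqxx.
have jJ' : j \notin J :\ d by apply/negP => jJ'; apply: (hj j).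
apply: (IH #|(j |: (J :\ d)) :&: D|) => //.
  rewrite -Jk; apply: proper_card; apply/properP; split.
    apply/subsetP => x; rewrite !inE => /andP [/orP [/eqP ->|/andP [_ xJ]] xD].
      by rewrite xD in jD.
    by rewrite xJ xD.
  exists d; first by rewrite !inE dJ dD.
  rewrite !inE eqxx /= orbF dD andbT; apply/eqP => e; by move: jD; rewrite -e dD.
  idtac.
split.
  move=> a b; case/setU1P => [->|aJ']; case/setU1P => [->|bJ'] //.
  - by move=> e; case: (hj b bJ' e).
  - by move=> e; case: (hj a aJ' (esym e)).
  - by apply: inj; apply: (subsetP J'J).
have cJ : #|j |: (J :\ d)| = #|J| by rewrite cardsU1 jJ' (cardsD1 d J) dJ.
have iJ : pb @: (j |: (J :\ d)) = pb @: J.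
  by rewrite imsetU1 -{2}(setD1K dJ) imsetU1 (pb_eq IV jI).
by case: cc => [c1|JE]; [left; rewrite cJ | right; rewrite iJ].
Qed.

Definition sel (v : {ffun {set 'I_n} -> bool}) (i : 'I_n) : bool :=
  if i \in D then [forall j in pb i, (j \notin D) ==> ~~ v [set j]] else v [set i].
Definition lift v : {ffun {set 'I_n} -> bool} :=
  [ffun J => (J \in JH V E) && [forall i in J, sel v i]].

Lemma lift_single v i : lift v [set i] = sel v i.
Proof. by rewrite ffunE single_JH (forall1 (sel v)). Qed.

Lemma lift_SH v : SHle V E D v -> SH V E (lift v).
Proof.
move=> [h1 h2 h3]; split.
- by move=> J /negbTE JJ; rewrite ffunE JJ.
- move=> I IV; under eq_bigr do rewrite lift_single.
  rewrite (big_setD1 (ibar I)) ?hibar //= -(setDD IV).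
  have ibD : ibar I \in D by apply: imset_f.
  under eq_bigr => i hi do rewrite /sel (negbTE (setDP hi).2).
  rewrite /sel ibD (pb_eq IV (hibar IV)).
  have -> : [forall j in I, (j \notin D) ==> ~~ v [set j]] =
            (\sum_(i in I :\: D) (v [set i] : nat) == 0)%N.
    rewrite sum_nat_eq0; apply/forall_inP/forallP => h j.
      apply/implyP; rewrite inE => /andP [jD jI].
      by move: (h j jI); rewrite jD /=; case: (v [set j]).
    move=> jI; apply/implyP => jD; have := h j; rewrite inE jD jI /=.
    by case: (v [set j]).
  by move: (h2 I IV); case: (\sum_(i in I :\: D) _)%N => [|[|]].
- move=> J JJ _; rewrite ffunE JJ /=.
  by apply/forall_inP/forall_inP => h i iJ; [rewrite lift_single | rewrite -lift_single]; exact: h.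
Qed.

Lemma lift_le v K : SHle V E D v -> K \in JHle V E D -> lift v K = v K.
Proof.
move=> [_ _ h3] KJ; have := KJ; rewrite inE => /andP [KJH KD].
rewrite ffunE KJH /= (prod_JH KJH (h3 K KJ)).
apply/forall_inP/forall_inP => h i iK; have := h i iK;
  have iD : i \notin D by have := subsetP KD i iK; rewrite in_setC.
  by rewrite /sel (negbTE iD).
by rewrite /sel (negbTE iD).
Qed.

Lemma main_sec : [/\ (forall x : {ffun {set 'I_n} -> R}, MC V E x -> MCle V E D (projle V E D x)),
      (forall x y : {ffun {set 'I_n} -> R}, MC V E x -> MC V E y ->
         projle V E D x = projle V E D y -> x = y) &
      (forall y : {ffun {set 'I_n} -> R}, MCle V E D y -> exists2 x, MC V E x & projle V E D x = y)].
Proof.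
split.
- move=> x [lam [l0 lA l1 lx]].
  pose f := fun w : {ffun {set 'I_n} -> bool} => [ffun J => (J \in JHle V E D) && w J].
  have -> : projle V E D x = [ffun k => \sum_w lam w * ((f w k : nat)%:R)].
    apply/ffunP => k; rewrite !ffunE lx; case: ifP => kin.
      by apply: eq_bigr => w _; rewrite ffunE kin.
    by rewrite big1 // => w _; rewrite ffunE kin mulr0.
  apply: conv_push l0 lA l1 _ => w [h1 h2 h3]; split.
  + by move=> J /negbTE JJ; rewrite ffunE JJ.
  + move=> I IV; rewrite -(h2 I IV) [X in (_ <= X)%N](@big_setID _ _ _ _ I D) /=.
    apply: (leq_trans _ (leq_addl _ _)); apply: leq_sum => i _; rewrite ffunE.
    by case: (_ \in _); case: (w _).
  + move=> J JJ c; rewrite ffunE JJ /=.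
    move: JJ; rewrite inE => /andP [JH KD]; rewrite (h3 J JH c).
    apply/forall_inP/forall_inP => h i iJ; have := h i iJ;
      have iD : i \notin D by have := subsetP KD i iJ; rewrite in_setC.
      by rewrite ffunE (single_JHle iD).
    by rewrite ffunE (single_JHle iD).
- move=> x y [lam [l0 lA l1 lx]] [mu [m0 mA m1 my]] /ffunP hp.
  have hK : forall K, K \in JHle V E D ->
      \sum_w lam w * (w K : nat)%:R = \sum_w mu w * (w K : nat)%:R.
    move=> K KJ; have := hp K; by rewrite !ffunE KJ -lx -my.
  apply/ffunP => J; rewrite lx my.
  case: (boolP (J \in JH V E)) => JJ.
    have [TJ _] := JH_T JJ.
    have eqs : forall w, SH V E w -> ((w J : nat)%:R : R) = ([forall i in J, w [set i]] : nat)%:R.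
      by move=> w [_ _ h3]; rewrite (prod_JH JJ (h3 J JJ)).
    rewrite (sum_eq_on lA eqs) (sum_eq_on mA eqs).
    exact: (Aff_T erefl TJ lA mA l1 m1 hK).
  have eqs : forall w, SH V E w -> ((w J : nat)%:R : R) = 0.
    by move=> w [h1 _ _]; rewrite h1.
  by rewrite (sum_eq_on lA eqs) (sum_eq_on mA eqs) !big1 // => w _; rewrite mulr0.
- move=> y [lam [l0 lA l1 ly]].
  exists [ffun k => \sum_v lam v * ((lift v k : nat)%:R)].
    exact: conv_push l0 lA l1 lift_SH.
  apply/ffunP => k; rewrite !ffunE ly; case: ifP => kin.
    by apply: (sum_eq_on lA) => v hv; rewrite lift_le.
  have eqs : forall v, SHle V E D v -> ((v k : nat)%:R : R) = 0.
    by move=> v [h1 _ _]; rewrite h1 // kin.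
  by rewrite (sum_eq_on lA eqs) big1 // => v _; rewrite mulr0.
Qed.

End Main.

Theorem proposition3p4 (R : realType) (n : nat)
  (V : {set {set 'I_n}}) (E : {set {set {set 'I_n}}})
  (ibar : {set 'I_n} -> 'I_n) :
  (0 < n)%N ->
  partition V [set: 'I_n] ->
  (forall I, I \in V -> (2 <= #|I|)%N) ->
  (forall e, e \in E -> (e \subset V) && (2 <= #|e|)%N) ->
  (forall (e e' : {set {set 'I_n}}), e \in E -> e' \subset e -> (1 < #|e'|)%N -> e' \in E) ->
  (forall I, I \in V -> ibar I \in I) ->
  let D := [set ibar I | I in V] in
  [/\ (forall x : {ffun {set 'I_n} -> R}, MC V E x -> MCle V E D (projle V E D x)),
      (forall x y : {ffun {set 'I_n} -> R}, MC V E x -> MC V E y ->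
         projle V E D x = projle V E D y -> x = y) &
      (forall y : {ffun {set 'I_n} -> R}, MCle V E D y -> exists2 x, MC V E x & projle V E D x = y)].
Proof.
move=> _ hP _ hE hdown hibar D.
exact: (@main_sec R n V E ibar hP hE hdown hibar).
Qed.
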